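(* Let $(X,\tau)$ be a nonempty regular topological space without isolated points whose underlying set $X$ is countable. There is a coloring $c:[X]^2\to2$ such that every infinite $c$-homogeneous subset of $X$ is nowhere dense in $(X,\tau)$. Consequently the ideal $nwd(X,\tau)$ of nowhere dense subsets of $(X,\tau)$ (viewed as a family of subsets of $\mathbb{N}$ via a fixed bijection $X\cong\mathbb{N}$) has a Borel selector.
   Context: A set $h$ is $c$-homogeneous if $c$ is constant on $[h]^2$. A Borel selector for a tall family $\mathcal{C}\subseteq2^{\mathbb{N}}$ is a Borel $S:2^{\mathbb{N}}\to2^{\mathbb{N}}$ with $S(x)\subseteq x$, $S(x)\in\mathcal{C}$, and $S(x)$ infinite whenever $x$ is infinite. *)

(* Defs.v *)
From Stdlib Require Import Arith List.

Set Implicit Arguments.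

Definition is_topology (X : Type) (open : (X -> Prop) -> Prop) : Prop :=
  open (fun _ => True) /\
  open (fun _ => False) /\
  (forall U V, open U -> open V -> open (fun x => U x /\ V x)) /\
  (forall F : (X -> Prop) -> Prop,
      (forall U, F U -> open U) -> open (fun x => exists U, F U /\ U x)).

Definition is_closed (X : Type) (open : (X -> Prop) -> Prop) (F : X -> Prop) :=
  open (fun x => ~ F x).

Definition closure (X : Type) (open : (X -> Prop) -> Prop) (A : X -> Prop) :
  X -> Prop :=
  fun x => forall U, open U -> U x -> exists y, U y /\ A y.

Definition nowhere_dense (X : Type) (open : (X -> Prop) -> Prop) (A : X -> Prop) :=
  forall U, open U -> (forall x, U x -> closure open A x) -> forall x, ~ U x.

Definition isolated (X : Type) (open : (X -> Prop) -> Prop) (x : X) :=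
  open (fun y => y = x).

Definition T1 (X : Type) (open : (X -> Prop) -> Prop) :=
  forall x y : X, x <> y -> exists U, open U /\ U x /\ ~ U y.

Definition regular (X : Type) (open : (X -> Prop) -> Prop) :=
  T1 open /\
  forall (x : X) (F : X -> Prop), is_closed open F -> ~ F x ->
    exists U V, open U /\ open V /\ U x /\ (forall y, F y -> V y) /\
                (forall y, ~ (U y /\ V y)).

Definition countable_type (X : Type) := exists f : X -> nat, forall x y, f x = f y -> x = y.

Definition infinite_set (X : Type) (A : X -> Prop) :=
  forall l : list X, exists x, A x /\ ~ In x l.

(** A coloring c : [X]^2 -> 2 is represented by a symmetric c : X -> X -> bool
    (its values on the diagonal are irrelevant). *)
Definition symmetric_coloring (X : Type) (c : X -> X -> bool) :=
  forall x y, c x y = c y x.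

Definition homogeneous (X : Type) (c : X -> X -> bool) (h : X -> Prop) :=
  exists b : bool, forall x y, h x -> h y -> x <> y -> c x y = b.

(** Cantor space 2^N = nat -> bool (subsets of N as characteristic functions). *)
Definition cantor_open (U : (nat -> bool) -> Prop) :=
  forall x, U x -> exists n, forall y, (forall i, i < n -> y i = x i) -> U y.

Inductive borel : ((nat -> bool) -> Prop) -> Prop :=
| borel_open : forall U, cantor_open U -> borel U
| borel_compl : forall B, borel B -> borel (fun x => ~ B x)
| borel_union : forall B : nat -> ((nat -> bool) -> Prop),
    (forall n, borel (B n)) -> borel (fun x => exists n, B n x).

Definition borel_function (S : (nat -> bool) -> (nat -> bool)) :=
  forall B, borel B -> borel (fun x => B (S x)).

Definition subset_of (s t : nat -> bool) := forall n, s n = true -> t n = true.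

Definition infinite_subset (s : nat -> bool) := forall m, exists n, m <= n /\ s n = true.

Definition borel_selector (C : (nat -> bool) -> Prop) (S : (nat -> bool) -> (nat -> bool)) :=
  borel_function S /\
  forall x, subset_of (S x) x /\ C (S x) /\ (infinite_subset x -> infinite_subset (S x)).

Definition nwd_family (X : Type) (open : (X -> Prop) -> Prop) (e : X -> nat)
  (s : nat -> bool) : Prop :=
  exists A : X -> Prop, nowhere_dense open A /\ forall x, s (e x) = true <-> A x.

(* Main.v *)
Require Import Defs.
From Stdlib Require Import Arith List Lia Classical ClassicalEpsilon FunctionalExtensionality PropExtensionality.

Lemma set_ext {A : Type} (P Q : A -> Prop) : (forall x, P x <-> Q x) -> P = Q.
Proof. intros H. apply functional_extensionality; intro x; apply propositional_extensionality; auto. Qed.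

Definition bP (P : Prop) : bool := if excluded_middle_informative P then true else false.
Lemma bP_true (P : Prop) : bP P = true <-> P.
Proof. unfold bP; destruct (excluded_middle_informative P); split; auto; try discriminate; contradiction. Qed.

Lemma least (P : nat -> Prop) n : P n -> exists m, P m /\ forall k, P k -> m <= k.
Proof.
  induction n as [n IH] using (well_founded_induction lt_wf). intros Hn.
  destruct (classic (exists k, k < n /\ P k)) as [(k&Hk&HPk)|Hno].
  - apply (IH k Hk HPk).
  - exists n; split; auto. intros k Hk. destruct (le_lt_dec n k); auto. exfalso; apply Hno; eauto.
Qed.

Lemma open_and {X} (open : (X -> Prop) -> Prop) U V : is_topology open -> open U -> open V ->
  open (fun x => U x /\ V x).
Proof. intros (_&_&Hi&_) HU HV. apply Hi; auto. Qed.

Lemma open_full {X} (open : (X -> Prop) -> Prop) : is_topology open -> open (fun _ => True).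
Proof. intros (H&_); exact H. Qed.

Lemma open_cosingleton {X} (open : (X -> Prop) -> Prop) (z : X) : is_topology open -> T1 open ->
  open (fun y => y <> z).
Proof.
  intros Ht HT. destruct Ht as (_&_&_&Hu).
  assert (E: (fun y => y <> z) = (fun x => exists U, (open U /\ ~ U z) /\ U x)).
  { apply set_ext; intro y; split.
    - intro Hy. destruct (HT y z Hy) as (U&HU&HUy&HUz). exists U; auto.
    - intros (U&(HU&HUz)&HUy) ->. contradiction. }
  rewrite E. apply Hu. intros U [HU _]; exact HU.
Qed.

Lemma closed_lt {X} (open : (X -> Prop) -> Prop) (f : X -> nat) : is_topology open -> T1 open ->
  (forall x y, f x = f y -> x = y) -> forall N, open (fun y => ~ f y < N).
Proof.
  intros Ht HT Hf N. induction N as [|N IH].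
  - assert (E: (fun y => ~ f y < 0) = (fun _ => True)) by (apply set_ext; intro; lia).
    rewrite E; apply open_full; auto.
  - assert (HN: open (fun y => f y <> N)).
    { destruct (classic (exists z, f z = N)) as [(z&Hz)|Hno].
      + assert (E: (fun y => f y <> N) = (fun y => y <> z)).
        { apply set_ext; intro y; split.
          - intros H ->; auto.
          - intros H H'. apply H, Hf; congruence. }
        rewrite E; apply open_cosingleton; auto.
      + assert (E: (fun y => f y <> N) = (fun _ => True)).
        { apply set_ext; intro y; split; auto. intros _ H; apply Hno; eauto. }
        rewrite E; apply open_full; auto. }
    assert (E: (fun y => ~ f y < S N) = (fun y => ~ f y < N /\ f y <> N)) by (apply set_ext; intro; lia).
    rewrite E. apply open_and; auto.
Qed.

Lemma UO_exists {X} (open : (X -> Prop) -> Prop) (f : X -> nat) :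
  is_topology open -> regular open -> (forall x y, f x = f y -> x = y) ->
  exists U O : X -> X -> Prop, (forall x, open (U x)) /\ (forall x, open (O x)) /\
    (forall x, U x x) /\ (forall x y, f y < f x -> O x y) /\ (forall x y, ~ (U x y /\ O x y)).
Proof.
  intros Ht [HT Hr] Hf.
  assert (H: forall x, exists p : (X -> Prop) * (X -> Prop), open (fst p) /\ open (snd p) /\
     fst p x /\ (forall y, f y < f x -> snd p y) /\ (forall y, ~ (fst p y /\ snd p y))).
  { intro x. destruct (Hr x (fun y => f y < f x)) as (U&V&HU&HV&HUx&HFV&HUV).
    - unfold is_closed. apply (closed_lt open f); auto.
    - lia.
    - exists (U,V); simpl; auto 10. }
  pose (p := fun x => proj1_sig (constructive_indefinite_description _ (H x))).
  assert (Hp : forall x, open (fst (p x)) /\ open (snd (p x)) /\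
     fst (p x) x /\ (forall y, f y < f x -> snd (p x) y) /\ (forall y, ~ (fst (p x) y /\ snd (p x) y))).
  { intro x. exact (proj2_sig (constructive_indefinite_description _ (H x))). }
  exists (fun x => fst (p x)), (fun x => snd (p x)).
  split; [intro x; apply (Hp x)|].
  split; [intro x; apply (Hp x)|].
  split; [intro x; apply (Hp x)|].
  split; [intros x y; apply (Hp x)|].
  intros x y; apply (Hp x).
Qed.

Lemma discrete_nwd {X} (open : (X -> Prop) -> Prop) (H : X -> Prop) :
  is_topology open -> T1 open -> (forall x, ~ isolated open x) ->
  (forall h, H h -> exists W, open W /\ W h /\ forall y, W y -> H y -> y = h) ->
  nowhere_dense open H.
Proof.
  intros Ht HT Hiso Hd U HU Hcl x Hx.
  destruct (Hcl x Hx U HU Hx) as (y & HUy & HHy).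
  destruct (Hd y HHy) as (W & HW & HWy & HWH).
  apply (Hiso y). unfold isolated.
  assert (E: (fun y0 => y0 = y) = (fun z => W z /\ U z)).
  { apply set_ext; intro z; split.
    - intros ->; auto.
    - intros [HWz HUz]. apply NNPP; intro Hne.
      assert (HG: open (fun z => (W z /\ U z) /\ z <> y)).
      { apply open_and; auto. apply open_and; auto. apply open_cosingleton; auto. }
      destruct (Hcl z HUz _ HG (conj (conj HWz HUz) Hne)) as (w & ((HWw & _) & Hwy) & HHw).
      apply Hwy. apply HWH; auto. }
  rewrite E. apply open_and; auto.
Qed.

Lemma cover {X} (f : X -> nat) : (forall x y, f x = f y -> x = y) ->
  forall N, exists l, forall y, f y < N -> In y l.
Proof.
  intros Hf N. induction N as [|N [l Hl]].
  - exists nil; intros; lia.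
  - destruct (classic (exists z, f z = N)) as [(z&Hz)|Hno].
    + exists (z :: l). intros y Hy. destruct (Nat.eq_dec (f y) N).
      * left. apply Hf; congruence.
      * right; apply Hl; lia.
    + exists l. intros y Hy. destruct (Nat.eq_dec (f y) N).
      * exfalso; eauto.
      * apply Hl; lia.
Qed.

Lemma inf_above {X} (f : X -> nat) (H : X -> Prop) : (forall x y, f x = f y -> x = y) ->
  infinite_set H -> forall N, exists y, H y /\ N <= f y.
Proof.
  intros Hf Hinf N. apply NNPP; intro Hn.
  destruct (cover f Hf N) as [l Hl]. destruct (Hinf l) as (y&Hy&Hnl).
  apply Hnl, Hl. destruct (le_lt_dec N (f y)); auto. exfalso; apply Hn; eauto.
Qed.

Lemma part1 {X} (open : (X -> Prop) -> Prop) : is_topology open -> regular open ->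
  (forall x, ~ isolated open x) -> countable_type X ->
  exists c : X -> X -> bool, symmetric_coloring c /\
      forall h : X -> Prop, infinite_set h -> homogeneous c h -> nowhere_dense open h.
Proof.
  intros Ht Hreg Hiso [f Hf].
  destruct (UO_exists open f Ht Hreg Hf) as (U&O&HU&HO&HUx&HOlt&HUO).
  exists (fun x y => if f x <? f y then bP (U x y) else bP (U y x)).
  split.
  - intros x y. destruct (Nat.ltb_spec (f x) (f y)), (Nat.ltb_spec (f y) (f x)); try lia; try reflexivity.
    assert (x = y) by (apply Hf; lia). subst; reflexivity.
  - intros h Hinf [b Hb]. apply discrete_nwd; auto. { apply Hreg. }
    intros y Hy. destruct b.
    + destruct (inf_above f h Hf Hinf (S (f y))) as (z&Hz&Hzf).
      destruct (least (fun n => exists z, h z /\ f z = n /\ f y < n) (f z)) as (n&(y'&Hy'&Hfy'&Hlt)&Hmin).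
      { exists z; repeat split; auto. }
      exists (fun w => U y w /\ O y' w). split; [apply open_and; auto|].
      split; [split; auto; apply HOlt; lia|].
      intros w [HUw HOw] Hw. destruct (lt_eq_lt_dec (f w) (f y)) as [[Hl|He]|Hg].
      * exfalso; apply (HUO y w); split; auto.
      * apply Hf; auto.
      * exfalso. assert (n <= f w) by (apply Hmin; eauto).
        destruct (Nat.eq_dec (f w) n).
        -- assert (w = y') by (apply Hf; lia). subst w. apply (HUO y' y'); auto.
        -- assert (Hne : y' <> w) by (intro; subst; lia).
           pose proof (Hb y' w Hy' Hw Hne) as Hc; cbv beta in Hc.
           destruct (Nat.ltb_spec (f y') (f w)); [|lia]. rewrite bP_true in Hc. apply (HUO y' w); auto.
    + exists (U y). split; auto. split; auto. intros w HUw Hw.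
      destruct (lt_eq_lt_dec (f w) (f y)) as [[Hl|He]|Hg].
      * exfalso; apply (HUO y w); split; auto.
      * apply Hf; auto.
      * exfalso. assert (Hne : y <> w) by (intro; subst; lia).
        pose proof (Hb y w Hy Hw Hne) as Hc; cbv beta in Hc.
        destruct (Nat.ltb_spec (f y) (f w)); [|lia].
        rewrite (proj2 (bP_true _) HUw) in Hc. discriminate.
Qed.

Lemma borel_ext B B' : borel B -> (forall x, B x <-> B' x) -> borel B'.
Proof. intros HB H. replace B' with B; auto. apply set_ext; auto. Qed.
Lemma borel_empty : borel (fun _ => False).
Proof. apply borel_open. intros x []. Qed.
Lemma borel_full : borel (fun _ => True).
Proof. apply borel_open. intros x _. exists 0. intros; exact I. Qed.
Lemma borel_const (P : Prop) : borel (fun _ => P).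
Proof.
  destruct (classic P).
  - apply borel_ext with (fun _ => True); [apply borel_full| intros; tauto].
  - apply borel_ext with (fun _ => False); [apply borel_empty| intros; tauto].
Qed.
Lemma borel_ex (B : nat -> (nat -> bool) -> Prop) : (forall n, borel (fun x => B n x)) ->
  borel (fun x => exists n, B n x).
Proof. intros H. apply (borel_union B). intro n; apply H. Qed.
Lemma borel_or B1 B2 : borel B1 -> borel B2 -> borel (fun x => B1 x \/ B2 x).
Proof.
  intros H1 H2. apply borel_ext with (fun x => exists n, (match n with 0 => B1 | _ => B2 end) x).
  - apply borel_union; intros [|n]; auto.
  - intros x; split; [intros [[|n] H]; auto | intros [H|H]; [exists 0|exists 1]; auto].
Qed.
Lemma borel_and B1 B2 : borel B1 -> borel B2 -> borel (fun x => B1 x /\ B2 x).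
Proof.
  intros H1 H2. apply borel_ext with (fun x => ~(~B1 x \/ ~B2 x)).
  - apply borel_compl, borel_or; apply borel_compl; auto.
  - intro x; split; [intro H; split; apply NNPP; tauto | tauto].
Qed.
Lemma borel_all (B : nat -> (nat -> bool) -> Prop) : (forall n, borel (fun x => B n x)) ->
  borel (fun x => forall n, B n x).
Proof.
  intros H. apply borel_ext with (fun x => ~ exists n, ~ B n x).
  - apply borel_compl. apply borel_ex. intro n; apply borel_compl; auto.
  - intro x; split.
    + intros H' n; apply NNPP; intro; apply H'; eauto.
    + intros H' [n Hn]; auto.
Qed.
Lemma borel_imp B1 B2 : borel B1 -> borel B2 -> borel (fun x => B1 x -> B2 x).
Proof.
  intros H1 H2. apply borel_ext with (fun x => ~ B1 x \/ B2 x).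
  - apply borel_or; auto. apply borel_compl; auto.
  - intro x; split; [intros [H|H] H'; tauto | intro H; destruct (classic (B1 x)); auto].
Qed.
Lemma borel_iff B1 B2 : borel B1 -> borel B2 -> borel (fun x => B1 x <-> B2 x).
Proof.
  intros H1 H2. apply borel_ext with (fun x => (B1 x -> B2 x) /\ (B2 x -> B1 x)).
  - apply borel_and; apply borel_imp; auto.
  - intro x; tauto.
Qed.
Lemma borel_ex_bool (B : bool -> (nat -> bool) -> Prop) : (forall b, borel (fun x => B b x)) ->
  borel (fun x => exists b, B b x).
Proof.
  intros H. apply borel_ext with (fun x => B true x \/ B false x).
  - apply borel_or; auto.
  - intro x; split; [intros [H'|H']; eauto | intros [[|] H']; auto].
Qed.
Lemma borel_ex_list (P : list (nat*bool) -> (nat -> bool) -> Prop) :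
  (forall l, borel (fun x => P l x)) -> borel (fun x => exists l, P l x).
Proof.
  assert (K : forall k (P0 : list (nat*bool) -> (nat -> bool) -> Prop),
     (forall l, borel (fun x => P0 l x)) -> borel (fun x => exists l, length l = k /\ P0 l x)).
  { induction k as [|k IH]; intros Q HP.
    - apply borel_ext with (fun x => Q nil x); auto.
      intro x; split; [intro; exists nil; auto | intros ([|a l]&Hl&H); simpl in Hl; [auto|discriminate]].
    - apply borel_ext with (fun x => exists d, exists b, exists l, length l = k /\ Q ((d,b)::l) x).
      + apply borel_ex; intro d. apply borel_ex_bool; intro b. apply (IH (fun l => Q ((d,b)::l))).
        intro; apply HP.
      + intro x; split.
        * intros (d&b&l&Hl&H). exists ((d,b)::l); simpl; auto.
        * intros ([|[d b] l]&Hl&H); simpl in Hl; [discriminate|]. exists d, b, l; auto. }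
  intros HP. apply borel_ext with (fun x => exists k, exists l, length l = k /\ P l x).
  - apply borel_ex; intro k; apply K; auto.
  - intro x; split; [intros (k&l&_&H); eauto | intros (l&H); exists (length l), l; auto].
Qed.
Lemma borel_coord n b : borel (fun x => x n = b).
Proof. apply borel_open. intros x Hx. exists (S n). intros y Hy. rewrite Hy; auto; lia. Qed.

Lemma dep_borel (S : (nat -> bool) -> (nat -> bool)) :
  (forall i, borel (fun x => S x i = true)) ->
  forall n (Q : (nat -> bool) -> Prop), (forall y z, (forall i, i < n -> y i = z i) -> Q y -> Q z) ->
  borel (fun x => Q (S x)).
Proof.
  intros HS n. induction n as [|n IH]; intros Q HQ.
  - apply borel_ext with (fun _ => Q (fun _ => false)); [apply borel_const|].
    intro x; split; apply HQ; intros; lia.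
  - pose (Qb := fun (b : bool) (y : nat -> bool) => Q (fun i => if Nat.eqb i n then b else y i)).
    assert (HQb : forall b y z, (forall i, i < n -> y i = z i) -> Qb b y -> Qb b z).
    { intros b y z Hyz. unfold Qb. apply HQ. intros i Hi. destruct (Nat.eqb_spec i n); auto. apply Hyz; lia. }
    apply borel_ext with (fun x => (S x n = true /\ Qb true (S x)) \/ (S x n = false /\ Qb false (S x))).
    + apply borel_or; apply borel_and; try apply IH; try (intros; eapply HQb; eauto).
      * apply HS.
      * apply borel_ext with (fun x => ~ S x n = true); [apply borel_compl, HS|].
        intro x; destruct (S x n); split; auto; congruence.
    + intro x; split.
      * intros [[Hn HQ1]|[Hn HQ0]]; eapply HQ; [|exact HQ1| |exact HQ0]; intros i Hi; simpl;
          destruct (Nat.eqb_spec i n); subst; auto.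
      * intro HQx. destruct (S x n) eqn:E; [left|right]; split; auto; unfold Qb; eapply HQ; [|exact HQx| |exact HQx];
          intros i Hi; destruct (Nat.eqb_spec i n); subst; auto.
Qed.

Lemma borel_fun_of_coords (S : (nat -> bool) -> (nat -> bool)) :
  (forall i, borel (fun x => S x i = true)) -> borel_function S.
Proof.
  intros HS B HB. induction HB as [U HU|B HB IH|B HB IH].
  - apply borel_ext with (fun x => exists n, (fun y => forall z, (forall i, i < n -> z i = y i) -> U z) (S x)).
    + apply borel_ex; intro n. apply (dep_borel S HS n (fun y => forall z, (forall i, i < n -> z i = y i) -> U z)).
      intros y y' Hyy' H z Hz. apply H. intros i Hi. rewrite Hz; auto. symmetry; auto.
    + intro x; split.
      * intros (n&H). apply H; auto.
      * intro H. destruct (HU (S x) H) as (n&Hn). exists n; exact Hn.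
  - exact (borel_compl IH).
  - exact (@borel_union (fun n x => B n (S x)) IH).
Qed.

Definition Inf (x : nat -> bool) (P : nat -> Prop) := forall k, exists n, k <= n /\ x n = true /\ P n.

Fixpoint RR (UU : nat -> nat -> Prop) (l : list (nat*bool)) (m : nat) : Prop :=
  match l with
  | nil => True
  | (d,t)::l' => (d < m /\ (UU d m <-> t = true)) /\ RR UU l' m
  end.

Fixpoint valid (UU : nat -> nat -> Prop) (x : nat -> bool) (l : list (nat*bool)) : Prop :=
  match l with
  | nil => True
  | (d,t)::l' => valid UU x l' /\ x d = true /\ RR UU l' d /\
      (forall m, m < d -> RR UU l' m -> x m = false) /\
      (t = true <-> Inf x (fun m => RR UU l' m /\ UU d m))
  end.

Fixpoint cnt (p : bool) (l : list (nat*bool)) : nat :=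
  match l with
  | nil => 0
  | (d,t)::l' => (if Bool.eqb t p then 1 else 0) + cnt p l'
  end.

Definition InfOut UU x := forall k, exists l, valid UU x l /\ k <= cnt false l.
Definition Sel UU x i := exists l t, valid UU x ((i,t)::l) /\ (t = false <-> InfOut UU x).
Definition Ssel UU x i := bP (Sel UU x i).

Section H.
Context (UU : nat -> nat -> Prop).

Lemma RR_in l d t m : In (d,t) l -> RR UU l m -> d < m /\ (UU d m <-> t = true).
Proof.
  induction l as [|[d' t'] l IH]; simpl; [tauto|].
  intros [E|Hin] [H1 H2]; [inversion E; subst; auto | auto].
Qed.

Lemma valid_uniq x l1 l2 : valid UU x l1 -> valid UU x l2 -> length l1 = length l2 -> l1 = l2.
Proof.
  revert l2. induction l1 as [|[d1 t1] l1 IH]; intros [|[d2 t2] l2]; simpl; try discriminate; auto.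
  intros (V1&X1&R1&M1&T1) (V2&X2&R2&M2&T2) Hl.
  assert (l1 = l2) by (apply IH; auto). subst l2.
  assert (d1 = d2).
  { destruct (lt_eq_lt_dec d1 d2) as [[Hlt|He]|Hg]; auto.
    - rewrite (M2 d1 Hlt R1) in X1; discriminate.
    - rewrite (M1 d2 Hg R2) in X2; discriminate. }
  subst d2.
  assert (t1 = t2).
  { destruct t1, t2; auto.
    - symmetry; apply (proj2 T2), (proj1 T1); reflexivity.
    - apply (proj2 T1), (proj1 T2); reflexivity. }
  subst; auto.
Qed.

Lemma valid_skipn x k l : valid UU x l -> valid UU x (skipn k l).
Proof.
  revert l; induction k as [|k IH]; intros [|[d t] l]; simpl; auto.
  intros (V&_); auto.
Qed.

Lemma valid_comp x l1 l2 : valid UU x l1 -> valid UU x l2 -> length l1 <= length l2 ->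
  forall a, In a l1 -> In a l2.
Proof.
  intros V1 V2 Hl a Ha.
  assert (E : l1 = skipn (length l2 - length l1) l2).
  { apply (valid_uniq x); auto. apply valid_skipn; auto. rewrite length_skipn. lia. }
  rewrite <- (firstn_skipn (length l2 - length l1) l2). apply in_or_app; right. rewrite <- E; auto.
Qed.

Lemma valid_in_suffix x l d t : valid UU x l -> In (d,t) l -> exists l', valid UU x ((d,t)::l').
Proof.
  induction l as [|[d' t'] l IH]; simpl; [tauto|].
  intros V [E|Hin].
  - inversion E; subst. exists l; exact V.
  - apply IH; auto. apply V.
Qed.

Lemma later x i t l j t' l' : valid UU x ((i,t)::l) -> valid UU x ((j,t')::l') -> i < j ->
  (UU i j <-> t = true).
Proof.
  intros Vi Vj Hij.
  destruct (le_lt_dec (length ((j,t')::l')) (length ((i,t)::l))) as [Hle|Hlt].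
  - exfalso. assert (Hin := valid_comp x _ _ Vj Vi Hle (j,t') (or_introl eq_refl)).
    destruct Hin as [E|Hin].
    + inversion E; lia.
    + destruct Vi as (_&_&HR&_). destruct (RR_in _ _ _ _ Hin HR). lia.
  - simpl in Hlt. destruct Vj as (Vl'&_&HR&_).
    assert (Hin := valid_comp x _ _ Vi Vl' ltac:(simpl; lia) (i,t) (or_introl eq_refl)).
    destruct (RR_in _ _ _ _ Hin HR); auto.
Qed.

Lemma inf_RR x l : valid UU x l -> infinite_subset x -> Inf x (RR UU l).
Proof.
  intros V Hinf. induction l as [|[d t] l IH].
  - intro k. destruct (Hinf k) as (n&?&?). exists n; simpl; auto.
  - destruct V as (V&_&_&_&T). specialize (IH V). destruct t.
    + assert (HI : Inf x (fun m => RR UU l m /\ UU d m)) by (apply T; auto).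
      intro k; destruct (HI (max k (S d))) as (n&Hn&Hx&HR&HU). exists n; simpl.
      repeat split; auto; lia.
    + assert (HnI : ~ Inf x (fun m => RR UU l m /\ UU d m)) by (intro H; apply T in H; discriminate).
      unfold Inf in HnI. apply not_all_ex_not in HnI. destruct HnI as [k0 Hk0].
      intro k. destruct (IH (max k (max k0 (S d)))) as (n&Hn&Hx&HR).
      exists n. split; [lia|]. split; auto. simpl. split; auto. split; [lia|].
      split; intro H'.
      * exfalso; apply Hk0; exists n; repeat split; auto; lia.
      * discriminate.
Qed.

Lemma extend x l : valid UU x l -> Inf x (RR UU l) -> exists a, valid UU x (a::l).
Proof.
  intros V I. destruct (I 0) as (n&_&Hx&HR).
  destruct (least (fun n => x n = true /\ RR UU l n) n (conj Hx HR)) as (d&(Hxd&HRd)&Hmin).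
  exists (d, bP (Inf x (fun m => RR UU l m /\ UU d m))). simpl.
  split; auto. split; auto. split; auto. split.
  - intros m Hm HRm. destruct (x m) eqn:E; auto. exfalso.
    specialize (Hmin m (conj E HRm)); lia.
  - apply bP_true.
Qed.

Lemma exists_len x : infinite_subset x -> forall k, exists l, valid UU x l /\ length l = k.
Proof.
  intros Hinf k. induction k as [|k (l&V&Hl)].
  - exists nil; simpl; auto.
  - destruct (extend x l V (inf_RR x l V Hinf)) as (a&Va). exists (a::l); simpl; auto.
Qed.

Lemma cnt_sum l : cnt true l + cnt false l = length l.
Proof. induction l as [|[d [|]] l IH]; simpl; lia. Qed.

Lemma cnt_big x l : valid UU x l -> forall p m, S m <= cnt p l -> exists d, In (d,p) l /\ m <= d.
Proof.
  induction l as [|[d t] l IH]; simpl; intros V p m Hc; [lia|].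
  destruct V as (V&_&HR&_).
  destruct (Bool.eqb t p) eqn:E.
  - apply Bool.eqb_prop in E; subst t. destruct m as [|m].
    + exists d; split; [left; auto|lia].
    + destruct (IH V p m ltac:(lia)) as (d'&Hin&Hd'). exists d. split; [left; auto|].
      destruct (RR_in _ _ _ _ Hin HR). lia.
  - destruct (IH V p m ltac:(lia)) as (d'&Hin&Hd'). exists d'; auto.
Qed.

Lemma Ssel_true x i : Ssel UU x i = true <-> Sel UU x i.
Proof. apply bP_true. Qed.

Lemma sel_infinite x : infinite_subset x -> infinite_subset (Ssel UU x).
Proof.
  intros Hinf m. destruct (classic (InfOut UU x)) as [HIO|Hno].
  - destruct (HIO (S m)) as (l&V&Hc). destruct (cnt_big x l V false m Hc) as (d&Hin&Hd).
    destruct (valid_in_suffix x l d false V Hin) as (l'&V'). exists d; split; auto.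
    apply Ssel_true. exists l', false. split; auto. split; auto.
  - unfold InfOut in Hno; apply not_all_ex_not in Hno. destruct Hno as [k Hk].
    destruct (exists_len x Hinf (k + S m)) as (l&V&Hl).
    assert (cnt false l < k) by (destruct (le_lt_dec k (cnt false l)); auto; exfalso; apply Hk; eauto).
    pose proof (cnt_sum l).
    destruct (cnt_big x l V true m ltac:(lia)) as (d&Hin&Hd).
    destruct (valid_in_suffix x l d true V Hin) as (l'&V'). exists d; split; auto.
    apply Ssel_true. exists l', true. split; auto. split; intro H'; [discriminate|exfalso; destruct (H' k) as (l0&V0&Hc0); apply Hk; eauto].
Qed.

Lemma Inf_borel P : borel (fun x => Inf x P).
Proof.
  unfold Inf. apply borel_all; intro k. apply borel_ex; intro n.
  apply borel_and; [apply borel_const|]. apply borel_and; [apply borel_coord|apply borel_const].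
Qed.

Lemma valid_borel l : borel (fun x => valid UU x l).
Proof.
  induction l as [|[d t] l IH]; simpl.
  - apply borel_full.
  - apply borel_and; auto. apply borel_and; [apply borel_coord|].
    apply borel_and; [apply borel_const|]. apply borel_and.
    + apply borel_all; intro m. apply borel_imp; [apply borel_const|].
      apply borel_imp; [apply borel_const|apply borel_coord].
    + apply borel_iff; [apply borel_const|apply Inf_borel].
Qed.

Lemma InfOut_borel : borel (fun x => InfOut UU x).
Proof.
  unfold InfOut. apply borel_all; intro k. apply borel_ex_list; intro l.
  apply borel_and; [apply valid_borel|apply borel_const].
Qed.

Lemma Ssel_borel : borel_function (Ssel UU).
Proof.
  apply borel_fun_of_coords. intro i.
  apply borel_ext with (fun x => Sel UU x i); [|intro x; rewrite Ssel_true; tauto].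
  unfold Sel. apply borel_ex_list; intro l. apply borel_ex_bool; intro t.
  apply borel_and; [apply valid_borel|]. apply borel_iff; [apply borel_const|apply InfOut_borel].
Qed.
End H.

Definition UUof {X} (U : X -> X -> Prop) (ei : nat -> X) (d m : nat) : Prop := U (ei d) (ei m).

Lemma sel_discrete {X} (open : (X -> Prop) -> Prop) (U O : X -> X -> Prop) (e : X -> nat) (ei : nat -> X) :
  (forall x y, e x = e y -> x = y) -> (forall y, ei (e y) = y) -> (forall n, e (ei n) = n) ->
  is_topology open -> (forall x, open (U x)) -> (forall x, open (O x)) -> (forall x, U x x) ->
  (forall x y, e y < e x -> O x y) -> (forall x y, ~ (U x y /\ O x y)) ->
  forall x y, Sel (UUof U ei) x (e y) ->
  exists W, open W /\ W y /\ forall z, W z -> Sel (UUof U ei) x (e z) -> z = y.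
Proof.
  intros Hinj Hie Hee Ht HU HO HUx HOlt HUO x y (l&t&V&Ht').
  destruct (classic (InfOut (UUof U ei) x)) as [HIO|Hno].
  - assert (t = false) by (apply Ht'; auto). subst t.
    exists (U y). split; auto. split; auto. intros z HUz (l'&t'&V'&_).
    destruct (lt_eq_lt_dec (e z) (e y)) as [[Hl|He]|Hg].
    + exfalso; apply (HUO y z); split; auto.
    + apply Hinj; auto.
    + exfalso. pose proof (later _ _ _ _ _ _ _ _ V V' Hg) as Hiff.
      unfold UUof in Hiff; rewrite !Hie in Hiff. apply Hiff in HUz. discriminate.
  - assert (t = true) by (destruct t; auto; exfalso; apply Hno, Ht'; auto). subst t.
    destruct (classic (exists j, Sel (UUof U ei) x j /\ e y < j)) as [(j&Sj&Hj)|Hnj].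
    + destruct (least (fun j => Sel (UUof U ei) x j /\ e y < j) j (conj Sj Hj)) as (j'&(Sj'&Hj')&Hmin).
      exists (fun w => U y w /\ O (ei j') w). split; [apply open_and; auto|].
      split; [split; auto; apply HOlt; rewrite Hee; auto|].
      intros z [HUz HOz] Sz. destruct (lt_eq_lt_dec (e z) (e y)) as [[Hl|He]|Hg].
      * exfalso; apply (HUO y z); split; auto.
      * apply Hinj; auto.
      * exfalso. assert (j' <= e z) by (apply Hmin; auto).
        destruct (Nat.eq_dec (e z) j') as [Hq|Hq].
        -- assert (z = ei j') by (apply Hinj; rewrite Hee; auto). subst z.
           apply (HUO (ei j') (ei j')); auto.
        -- destruct Sj' as (l''&t''&V''&Ht'').
           assert (t'' = true) by (destruct t''; auto; exfalso; apply Hno, Ht''; auto). subst t''.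
           destruct Sz as (l'&t'&V'&_).
           pose proof (later _ _ _ _ _ _ _ _ V'' V' ltac:(lia)) as Hiff.
           unfold UUof in Hiff; rewrite !Hie in Hiff.
           apply (HUO (ei j') z); split; auto. apply Hiff; auto.
    + exists (U y). split; auto. split; auto. intros z HUz Sz.
      destruct (lt_eq_lt_dec (e z) (e y)) as [[Hl|He]|Hg].
      * exfalso; apply (HUO y z); split; auto.
      * apply Hinj; auto.
      * exfalso; apply Hnj; eauto.
Qed.

Theorem mainTheorem18 (X : Type) (open : (X -> Prop) -> Prop) :
  is_topology open ->
  (exists x0 : X, True) ->
  regular open ->
  (forall x : X, ~ isolated open x) ->
  countable_type X ->
  (exists c : X -> X -> bool,
      symmetric_coloring c /\
      forall h : X -> Prop, infinite_set h -> homogeneous c h -> nowhere_dense open h)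
  /\
  (forall e : X -> nat,
      (forall x y, e x = e y -> x = y) -> (forall n, exists x, e x = n) ->
      exists S, borel_selector (nwd_family open e) S).
Proof.
  intros Ht _ Hreg Hiso Hcount. split; [apply part1; auto|].
  intros e Hinj Hsurj.
  destruct (UO_exists open e Ht Hreg Hinj) as (U&O&HU&HO&HUx&HOlt&HUO).
  pose (ei := fun n => proj1_sig (constructive_indefinite_description _ (Hsurj n))).
  assert (Hee : forall n, e (ei n) = n) by (intro n; exact (proj2_sig (constructive_indefinite_description _ (Hsurj n)))).
  assert (Hie : forall y, ei (e y) = y) by (intro y; apply Hinj; rewrite Hee; auto).
  exists (Ssel (UUof U ei)). split; [apply Ssel_borel|].
  intro x. split; [|split].
  - intros n Hn. apply Ssel_true in Hn. destruct Hn as (l&t&V&_). destruct V as (_&Hx&_); exact Hx.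
  - exists (fun y => Ssel (UUof U ei) x (e y) = true). split; [|intro; tauto].
    apply discrete_nwd; auto. { apply Hreg. }
    intros y Hy. rewrite Ssel_true in Hy.
    destruct (sel_discrete open U O e ei Hinj Hie Hee Ht HU HO HUx HOlt HUO x y Hy) as (W&HW&HWy&HWz).
    exists W; split; auto; split; auto. intros z Hz HSz. apply HWz; auto. apply Ssel_true; auto.
  - apply sel_infinite.
Qed.
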